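(* Let $k$ be a positive integer, $q=2^k$, $F(X)=X^{q^2-q+1}$, $T_k(Y)=\sum_{i=0}^{k-1}Y^{2^i}$ and $f_{k,q+1}(Y)=\dfrac{T_k(Y)^{q+1}}{Y^{q}}$ (a polynomial in $\mathbb{F}_2[Y]$). Then, in $\mathbb{F}_2[X]$, $$F(X)+F(X+1)+1=f_{k,q+1}(X+X^2).$$
   Context: $f_{k,2^k+1}$ is the Müller–Cohen–Matthews polynomial; it is a polynomial because $Y$ divides $T_k(Y)$. *)

(* Defs.v *)
From HB Require Import structures.
From mathcomp Require Import all_boot all_order all_algebra.
Set Implicit Arguments. Unset Strict Implicit. Unset Printing Implicit Defensive.
Import GRing.Theory.
Local Open Scope ring_scope.

Definition Tk (k : nat) : {poly 'F_2} := \sum_(i < k) 'X^(2 ^ i).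

(* f_{k,q+1}(Y) = T_k(Y)^(q+1) / Y^q with q = 2^k (exact division: Y | T_k) *)
Definition fkq1 (k : nat) : {poly 'F_2} :=
  (Tk k ^+ (2 ^ k).+1) %/ 'X^(2 ^ k).

Definition Fexp (k : nat) : nat := ((2 ^ k) ^ 2 - 2 ^ k + 1)%N.

(* Main.v *)
Require Import Defs.
From HB Require Import structures.
From mathcomp Require Import all_boot all_order all_algebra ring.
Import GRing.Theory.
Local Open Scope ring_scope.
Lemma two0 : (2%:R : {poly 'F_2}) = 0.
Proof. rewrite -polyC_natr. have -> : (2%:R : 'F_2) = 0 by apply/val_inj. exact: polyC0. Qed.
Lemma sq2 (p r : {poly 'F_2}) : (p+r)^+2 = p^+2 + r^+2.
Proof. by rewrite sqrrD -mulr_natr two0 mulr0 addr0. Qed.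
Lemma frob (p r : {poly 'F_2}) n : (p+r)^+(2^n) = p^+(2^n) + r^+(2^n).
Proof.
elim: n p r => [|n IH] p r; first by rewrite !expr1.
by rewrite expnS !exprM sq2 IH.
Qed.

Lemma addxx (a : {poly 'F_2}) : a + a = 0.
Proof. by rewrite -mulr2n -mulr_natr two0 mulr0. Qed.

Lemma TkY (k : nat) : Tk k \Po ('X + 'X^2) = 'X + 'X^(2^k).
Proof.
rewrite /Tk raddf_sum /=.
elim: k => [|k IH]; first by rewrite big_ord0 expn0 expr1 addxx.
rewrite big_ord_recr /= IH comp_Xn_poly frob -exprM -expnS.
have h : forall a b c : {poly 'F_2}, a + b + (b + c) = a + c.
  by move=> a b c; rewrite addrA -(addrA a) addxx addr0.
exact: h.
Qed.

Lemma fkq1E (k : nat) (hk : (0 < k)%N) : fkq1 k * 'X^(2^k) = Tk k ^+ (2^k).+1.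
Proof.
rewrite /fkq1 divpK //.
have hX : 'X %| Tk k.
  rewrite /Tk; apply: (big_ind (fun p => 'X %| p)); [exact: dvdp0|exact: dvdp_add|move=> i _].
  by rewrite -{1}(expr1 'X) dvdp_exp2l // expn_gt0.
by rewrite exprS; apply/dvdp_mull/dvdp_exp2r.
Qed.

Lemma Ynz : ('X + 'X^2 : {poly 'F_2}) != 0.
Proof.
apply/eqP => h; have := congr1 (fun p : {poly 'F_2} => p`_1) h.
by rewrite coefD coefX coefXn coef0 /= addr0 => /eqP; rewrite oner_eq0.
Qed.

From mathcomp Require Import zify.

Theorem mainTheorem4 (k : nat) (hk : (0 < k)%N) :
  'X^(Fexp k) + ('X + 1) ^+ (Fexp k) + 1 = (fkq1 k) \Po ('X + 'X^2 : {poly 'F_2}).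
Proof.
set Y := ('X + 'X^2 : {poly 'F_2}).
have E : (fkq1 k \Po Y) * Y ^+ (2^k) = ('X + 'X^(2^k)) ^+ (2^k).+1.
  by rewrite -TkY -rmorphXn -(fkq1E _ hk) rmorphM /= comp_Xn_poly.
apply: (mulIf (expf_neq0 (2^k) Ynz)); rewrite E.
have q0 : (0 < 2^k)%N by rewrite expn_gt0.
set q := (2^k)%N in q0 E *.
set Q := ('X^q : {poly 'F_2}).
set Q2 := ('X^(q*q) : {poly 'F_2}).
have hY : Y ^+ q = Q + Q * Q.
  by rewrite /Y /q frob -exprM mulnC exprM -expr2.
have hR : ('X + Q) ^+ q.+1 = (Q + Q2) * ('X + Q).
  by rewrite exprSr /Q /q frob -exprM.
have hq : (q * q = 2 ^ (k + k))%N by rewrite expnD.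
have he : (Fexp k + q = q * q + 1)%N.
  rewrite /Fexp -/q -mulnn. nia.
have ha : 'X^(Fexp k) * Q = 'X * Q2.
  by rewrite /Q /Q2 -exprD he exprD expr1 mulrC.
have hb : ('X + 1) ^+ (Fexp k) * (Q + 1) = (Q2 + 1) * ('X + 1).
  have -> : Q + 1 = ('X + 1) ^+ q by rewrite /Q /q frob expr1n.
  by rewrite -exprD he exprD expr1 /Q2 hq frob expr1n.
rewrite hY hR.
transitivity (('X^(Fexp k) * Q) * (1 + Q) + (('X + 1) ^+ (Fexp k) * (Q + 1)) * Q + (Q + Q * Q)).
  ring.
rewrite ha hb.
transitivity ((Q + Q2) * ('X + Q) + 2%:R * ('X * Q * Q2 + Q)).
  ring.
by rewrite two0 mul0r addr0.
Qed.
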